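(* Let $G<\mathrm{Aut}(\mathbf{T})$ be finitely generated and fix a generating $n$-tuple $S\in\Gamma_n(G)$. Suppose $G$ acts transitively on every level $\{0,1\}^m$ of $\mathbf{T}$. Suppose there is a constant $\alpha$ such that for every $m\ge1$ there exist a string $s\in\{0,1\}^m$ and a nontrivial element $g\in\mathrm{Rist}_G(s)$ with $\ell_S(g)\le\alpha 2^m$. Then $\Gamma_k(G,S)$ has exponential growth for every $k\ge n+2$.
   Context: $\mathbf{T}=\{0,1\}^*$ is the rooted binary tree of finite binary strings (root the empty string, children of $s$ being $s0,s1$), and $\mathrm{Aut}(\mathbf{T})$ is its automorphism group (length-preserving bijections $g$ of strings such that $g(st)$ begins with $g(s)$). For $s\in\{0,1\}^m$, $\mathrm{Rist}(s)$ is the subgroup of elements of $\mathrm{Aut}(\mathbf{T})$ fixing every string that does not begin with $s$, and $\mathrm{Rist}_G(s)=G\cap\mathrm{Rist}(s)$. $\ell_S(g)$ denotes the word length of $g$ with respect to the entries of $S$ and their inverses. For a group $G$, a generating $n$-tuple is $(g_1,\dots,g_n)\in G^n$ generating $G$; the product replacement graph $\Gamma_n(G)$ has vertices the generating $n$-tuples, with edges from $(g_1,\dots,g_n)$ to each tuple obtained by replacing $g_j$ by $g_jg_i^{\pm1}$ or $g_i^{\pm1}g_j$, for every ordered pair $i\neq j$. For $S=(g_1,\dots,g_n)$ and $k\ge n$, $\Gamma_k(G,S)$ is the connected component of $\Gamma_k(G)$ containing $(g_1,\dots,g_n,1,\dots,1)$. A connected graph has exponential growth if for some vertex $v$ there is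 $\beta>1$ such that the number of vertices at distance at most $r$ from $v$ is at least $\beta^r$ for all sufficiently large $r$. *)

(* Defs.v *)
From Stdlib Require Import Reals List Arith.
Import ListNotations.

Definition str := list bool.
Definition fn := str -> str.

(* An element of Aut(T) is represented by (g, g^{-1}). *)
Definition Aut := (fn * fn)%type.

Definition is_aut (a : Aut) : Prop :=
  (forall s, snd a (fst a s) = s) /\
  (forall s, fst a (snd a s) = s) /\
  (forall s, length (fst a s) = length s) /\
  (forall s t, exists u, fst a (s ++ t) = fst a s ++ u).

Definition mul (a b : Aut) : Aut :=
  (fun x => fst a (fst b x), fun x => snd b (snd a x)).
Definition inv (a : Aut) : Aut := (snd a, fst a).
Definition one : Aut := (fun x => x, fun x => x).

Definition letter (T : list Aut) (p : nat * bool) : Aut :=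
  if snd p then nth (fst p) T one else inv (nth (fst p) T one).

Definition eval (T : list Aut) (w : list (nat * bool)) : Aut :=
  fold_right (fun p acc => mul (letter T p) acc) one w.

Definition valid_word (T : list Aut) (w : list (nat * bool)) : Prop :=
  Forall (fun p => fst p < length T) w.

Definition generated (T : list Aut) (g : Aut) : Prop :=
  exists w, valid_word T w /\ eval T w = g.

Definition word_length_le (T : list Aut) (g : Aut) (x : R) : Prop :=
  exists w, valid_word T w /\ (INR (length w) <= x)%R /\ eval T w = g.

Definition level_transitive (G : Aut -> Prop) : Prop :=
  forall m (s t : str), length s = m -> length t = m ->
    exists g, G g /\ fst g s = t.

Definition in_rist (s : str) (g : Aut) : Prop :=
  forall u, ~ (exists v, u = s ++ v) -> fst g u = u.

Definition vertex (G : Aut -> Prop) (k : nat) (T : list Aut) : Prop :=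
  length T = k /\ (forall x, In x T -> G x) /\ (forall g, G g -> generated T g).

Fixpoint set_nth {A} (l : list A) (j : nat) (x : A) : list A :=
  match l, j with
  | [], _ => []
  | _ :: t, 0 => x :: t
  | h :: t, S j' => h :: set_nth t j' x
  end.

Definition step (k : nat) (T T' : list Aut) : Prop :=
  exists i j, i < k /\ j < k /\ i <> j /\
    (T' = set_nth T j (mul (nth j T one) (nth i T one)) \/
     T' = set_nth T j (mul (nth j T one) (inv (nth i T one))) \/
     T' = set_nth T j (mul (nth i T one) (nth j T one)) \/
     T' = set_nth T j (mul (inv (nth i T one)) (nth j T one))).

Definition adj (G : Aut -> Prop) (k : nat) (T T' : list Aut) : Prop :=
  vertex G k T /\ vertex G k T' /\ (step k T T' \/ step k T' T).

Fixpoint within (G : Aut -> Prop) (k r : nat) (v w : list Aut) : Prop :=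
  match r with
  | 0 => v = w
  | S r' => within G k r' v w \/ exists u, within G k r' v u /\ adj G k u w
  end.

Definition component_exp_growth (G : Aut -> Prop) (k : nat) (v0 : list Aut) : Prop :=
  exists v, vertex G k v /\ (exists r, within G k r v0 v) /\
    exists beta : R, (1 < beta)%R /\ exists R0 : nat, forall r, R0 <= r ->
      exists l : list (list Aut), NoDup l /\
        (forall T, In T l -> within G k r v T) /\
        (beta ^ r <= INR (length l))%R.

(* Main.v *)
Require Import Defs.
From Stdlib Require Import Reals List Arith Lia Lra ZArith Classical FunctionalExtensionality PropExtensionality FinFun.
Import ListNotations.


Lemma app_len_inj (a b t u : str) : length a = length b -> a ++ t = b ++ u -> a = b.
Proof.
  revert b. induction a as [|x a IH]; destruct b as [|y b]; simpl; intros H1 H2;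
    try discriminate; auto.
  inversion H2; subst. f_equal. apply IH; auto.
Qed.

Lemma is_aut_inv a : is_aut a -> is_aut (inv a).
Proof.
  intros [H1 [H2 [H3 H4]]]. unfold inv, is_aut; simpl.
  assert (L : forall s, length (snd a s) = length s).
  { intro s. rewrite <- (H3 (snd a s)). rewrite H2. reflexivity. }
  split; [auto|split; [auto|split; [auto|]]].
  intros s t. set (x := snd a (s ++ t)).
  exists (skipn (length s) x).
  assert (Lx : length x = length s + length t) by (unfold x; rewrite L, length_app; auto).
  assert (F : firstn (length s) x = snd a s).
  { destruct (H4 (firstn (length s) x) (skipn (length s) x)) as [u Hu].
    rewrite firstn_skipn in Hu. unfold x in Hu. rewrite H2 in Hu.
    assert (E : s = fst a (firstn (length s) x)).
    { eapply app_len_inj; [|exact Hu]. rewrite H3, length_firstn. lia. }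
    transitivity (snd a (fst a (firstn (length s) x))).
    rewrite H1; auto. rewrite <- E; auto. }
  rewrite <- F. symmetry. apply firstn_skipn.
Qed.

Lemma is_aut_mul a b : is_aut a -> is_aut b -> is_aut (mul a b).
Proof.
  intros [A1 [A2 [A3 A4]]] [B1 [B2 [B3 B4]]]. unfold mul, is_aut; simpl.
  split; [|split; [|split]]; intros.
  - rewrite A1, B1; auto.
  - rewrite B2, A2; auto.
  - rewrite A3, B3; auto.
  - destruct (B4 s t) as [u Hu]. rewrite Hu. apply A4.
Qed.

Lemma is_aut_one : is_aut one.
Proof. unfold one, is_aut; simpl. repeat split; intros; eauto. Qed.

Lemma is_aut_nth (S : list Aut) i : Forall is_aut S -> is_aut (nth i S one).
Proof.
  intros H. destruct (Nat.lt_ge_cases i (length S)).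
  - rewrite Forall_forall in H. apply H. apply nth_In. auto.
  - rewrite nth_overflow by auto. apply is_aut_one.
Qed.

Lemma is_aut_letter S p : Forall is_aut S -> is_aut (letter S p).
Proof.
  intros H. unfold letter. destruct (snd p).
  - apply is_aut_nth; auto.
  - apply is_aut_inv, is_aut_nth; auto.
Qed.

Lemma is_aut_eval S w : Forall is_aut S -> is_aut (eval S w).
Proof.
  intros H. induction w; simpl. apply is_aut_one.
  apply is_aut_mul; auto. apply is_aut_letter; auto.
Qed.

Lemma is_aut_gen S g : Forall is_aut S -> generated S g -> is_aut g.
Proof. intros H [w [_ <-]]. apply is_aut_eval; auto. Qed.

Lemma eval_app T w1 w2 : eval T (w1 ++ w2) = mul (eval T w1) (eval T w2).
Proof.
  induction w1; simpl.
  - unfold mul, one; simpl. destruct (eval T w2); reflexivity.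
  - rewrite IHw1. reflexivity.
Qed.

Definition flip (p : nat * bool) := (fst p, negb (snd p)).

Lemma eval_flip T p : eval T [flip p] = inv (letter T p).
Proof. destruct p as [i []]; reflexivity. Qed.

Lemma inv_eval T w : inv (eval T w) = eval T (rev (map flip w)).
Proof.
  induction w; simpl. reflexivity.
  rewrite eval_app, eval_flip, <- IHw. reflexivity.
Qed.

Lemma gen_one S : generated S one.
Proof. exists []. split; [constructor|reflexivity]. Qed.

Lemma gen_mul S a b : generated S a -> generated S b -> generated S (mul a b).
Proof.
  intros [w1 [V1 <-]] [w2 [V2 <-]]. exists (w1 ++ w2). split.
  apply Forall_app; auto. apply eval_app.
Qed.

Lemma gen_inv S a : generated S a -> generated S (inv a).
Proof.
  intros [w [V <-]]. exists (rev (map flip w)). split.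
  - apply Forall_rev. apply Forall_map. eapply Forall_impl; [|exact V]. simpl; auto.
  - symmetry; apply inv_eval.
Qed.

Lemma gen_nth S i : i < length S -> generated S (nth i S one).
Proof.
  intros H. exists [(i,true)]. split. constructor; simpl; auto.
  simpl. unfold letter; simpl. set (a := nth i S one). clearbody a. destruct a; reflexivity.
Qed.

Lemma gen_letter S p : fst p < length S -> generated S (letter S p).
Proof.
  intros H. unfold letter. destruct (snd p). apply gen_nth; auto.
  apply gen_inv, gen_nth; auto.
Qed.

Lemma within_refl G k r v : within G k r v v.
Proof. induction r; simpl; auto. Qed.

Lemma within_S G k r v w : within G k r v w -> within G k (S r) v w.
Proof. simpl; auto. Qed.

Lemma within_mono G k r r' v w : r <= r' -> within G k r v w -> within G k r' v w.
Proof. induction 1; auto. intros; apply within_S; auto. Qed.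

Lemma within_trans G k r1 r2 u v w :
  within G k r1 u v -> within G k r2 v w -> within G k (r1 + r2) u w.
Proof.
  revert w. induction r2; intros w H1 H2; simpl in H2.
  - subst. rewrite Nat.add_0_r. auto.
  - rewrite Nat.add_succ_r. destruct H2 as [H2|[x [H2 H3]]].
    + apply within_S; auto.
    + simpl. right. exists x; split; auto.
Qed.

Definition Tup (S : list Aut) (K : nat) (y z : Aut) := S ++ y :: z :: repeat one K.

Lemma set_nth_app {A} (l1 l2 : list A) j x :
  set_nth (l1 ++ l2) (length l1 + j) x = l1 ++ set_nth l2 j x.
Proof.
  induction l1; simpl; auto. rewrite IHl1. auto.
Qed.



Lemma Tup_nthS S K y z i : i < length S -> nth i (Tup S K y z) one = nth i S one.
Proof. intros; unfold Tup; rewrite app_nth1; auto. Qed.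
Lemma Tup_nthy S K y z : nth (length S) (Tup S K y z) one = y.
Proof. unfold Tup; rewrite app_nth2, Nat.sub_diag; auto. Qed.
Lemma Tup_nthz S K y z : nth (length S + 1) (Tup S K y z) one = z.
Proof. unfold Tup; rewrite app_nth2 by lia. replace (length S + 1 - length S) with 1 by lia. auto. Qed.
Lemma Tup_sety S K y z x : set_nth (Tup S K y z) (length S) x = Tup S K x z.
Proof. unfold Tup. rewrite <- (Nat.add_0_r (length S)) at 1. rewrite set_nth_app. auto. Qed.
Lemma Tup_setz S K y z x : set_nth (Tup S K y z) (length S + 1) x = Tup S K y x.
Proof. unfold Tup. rewrite set_nth_app. auto. Qed.
Lemma Tup_len S K y z : length (Tup S K y z) = length S + 2 + K.
Proof. unfold Tup. rewrite length_app. simpl. rewrite repeat_length. lia. Qed.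

Lemma Tup_vertex S K y z :
  generated S y -> generated S z ->
  vertex (generated S) (length S + 2 + K) (Tup S K y z).
Proof.
  intros Hy Hz. split; [apply Tup_len|split].
  - intros x Hx. unfold Tup in Hx. apply in_app_or in Hx. destruct Hx as [Hx|Hx].
    + destruct (In_nth _ _ one Hx) as [i [Hi <-]]. apply gen_nth; auto.
    + destruct Hx as [<-|[<-|Hx]]; auto. apply repeat_spec in Hx. subst. apply gen_one.
  - intros g [w [V <-]]. exists w. split.
    + eapply Forall_impl; [|exact V]. intros p Hp; simpl in *. rewrite Tup_len. lia.
    + induction w; simpl; auto. inversion V; subst. rewrite IHw by auto.
      unfold letter. rewrite Tup_nthS; auto.
Qed.

Lemma step_within S K y z y' z' :
  generated S y -> generated S z -> generated S y' -> generated S z' ->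
  step (length S + 2 + K) (Tup S K y z) (Tup S K y' z') ->
  within (generated S) (length S + 2 + K) 1 (Tup S K y z) (Tup S K y' z').
Proof.
  intros. simpl. right. exists (Tup S K y z). split; auto.
  split; [apply Tup_vertex; auto|split; [apply Tup_vertex; auto|auto]].
Qed.

Lemma move_zr S K y z i b : i < length S ->
  generated S y -> generated S z ->
  within (generated S) (length S + 2 + K) 1 (Tup S K y z)
    (Tup S K y (mul z (letter S (i,b)))).
Proof.
  intros Hi Hy Hz. apply step_within; auto. apply gen_mul; auto. apply gen_letter; auto.
  exists i, (length S + 1). split; [lia|split; [lia|split; [lia|]]].
  rewrite Tup_nthz, Tup_nthS by auto.
  destruct b; simpl; rewrite !Tup_setz; [left|right;left]; auto.

Qed.

Lemma move_zl S K y z i b : i < length S ->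
  generated S y -> generated S z ->
  within (generated S) (length S + 2 + K) 1 (Tup S K y z)
    (Tup S K y (mul (letter S (i,b)) z)).
Proof.
  intros Hi Hy Hz. apply step_within; auto. apply gen_mul; auto. apply gen_letter; auto.
  exists i, (length S + 1). split; [lia|split; [lia|split; [lia|]]].
  rewrite Tup_nthz, Tup_nthS by auto.
  destruct b; simpl; rewrite !Tup_setz; [right;right;left|right;right;right]; auto.

Qed.

Lemma move_y S K y z :
  generated S y -> generated S z ->
  within (generated S) (length S + 2 + K) 1 (Tup S K y z) (Tup S K (mul y z) z).
Proof.
  intros Hy Hz. apply step_within; auto. apply gen_mul; auto.
  exists (length S + 1), (length S). split; [lia|split; [lia|split; [lia|]]].
  rewrite Tup_nthz, Tup_nthy, Tup_sety. auto.
Qed.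

Definition act (S : list Aut) (p : nat * bool) (u : str) := fst (letter S p) u.

Lemma act_len S p u : Forall is_aut S -> length (act S p u) = length u.
Proof. intros H. destruct (is_aut_letter S p H) as [_ [_ [L _]]]. apply L. Qed.

Lemma act_flip S p u : Forall is_aut S -> act S (flip p) (act S p u) = u.
Proof.
  intros H. unfold act. destruct p as [i []]; simpl;
  destruct (is_aut_nth S i H) as [H1 [H2 _]]; auto.
Qed.

Fixpoint vis S (W : list (nat * bool)) (v : str) : list str :=
  match W with [] => [v] | p :: W' => v :: vis S W' (act S p v) end.
Fixpoint endv S (W : list (nat * bool)) (v : str) : str :=
  match W with [] => v | p :: W' => endv S W' (act S p v) end.

Lemma endv_app S W1 W2 v : endv S (W1 ++ W2) v = endv S W2 (endv S W1 v).
Proof. revert v; induction W1; simpl; auto. Qed.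

Lemma vis_app S W1 W2 v x :
  In x (vis S (W1 ++ W2) v) <-> In x (vis S W1 v) \/ In x (vis S W2 (endv S W1 v)).
Proof.
  revert v; induction W1; intros v; simpl.
  - destruct W2; simpl; intuition.
  - rewrite IHW1. intuition.
Qed.

Lemma vis_len S W v x : Forall is_aut S -> In x (vis S W v) -> length x = length v.
Proof.
  intros H. revert v; induction W as [|p W IHW]; intros v; simpl; intros [E|E]; subst; auto.
  - destruct E.
  - rewrite (IHW _ E). apply act_len; auto.
Qed.

Lemma vis_head S W v : In v (vis S W v).
Proof. destruct W; simpl; auto. Qed.

Lemma eval_endv S w v : fst (eval S w) v = endv S (rev w) v.
Proof.
  induction w; simpl; auto. rewrite endv_app, <- IHw. reflexivity.
Qed.

Lemma exit_lemma S (V : list str) W v :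
  In v V -> ~ In (endv S W v) V ->
  Forall (fun p => fst p < length S) W ->
  exists a p, In a V /\ fst p < length S /\ ~ In (act S p a) V.
Proof.
  revert v; induction W; simpl; intros v Hv He HW. contradiction.
  inversion HW; subst.
  destruct (classic (In (act S a v) V)).
  - eapply IHW; eauto.
  - exists v, a. auto.
Qed.

Lemma split_vis S W v a : In a (vis S W v) ->
  exists W1 W2, W = W1 ++ W2 /\ endv S W1 v = a.
Proof.
  revert v; induction W; simpl; intros v H.
  - destruct H as [<-|[]]. exists [], []. auto.
  - destruct H as [<-|H]. exists [], (a0 :: W). auto.
    destruct (IHW _ H) as [W1 [W2 [E1 E2]]]. exists (a0 :: W1), W2. subst; auto.
Qed.

Fixpoint all_str (m : nat) : list (list bool) :=
  match m with 0 => [[]] | S m' => map (cons true) (all_str m') ++ map (cons false) (all_str m') end.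

Lemma all_str_len m : length (all_str m) = 2 ^ m.
Proof. induction m; [reflexivity|]. simpl all_str. rewrite length_app, !length_map, IHm. simpl. lia. Qed.

Lemma all_str_in m x : length x = m -> In x (all_str m).
Proof.
  revert x; induction m; intros x H; simpl.
  - destruct x; try discriminate; auto.
  - destruct x as [|[] x]; try discriminate; simpl in H; apply in_or_app.
    left; apply in_map; auto. right; apply in_map; auto.
Qed.

Lemma all_str_nodup m : NoDup (all_str m).
Proof.
  induction m; simpl. constructor; auto. constructor.
  apply NoDup_app.
  - apply FinFun.Injective_map_NoDup; auto. intros a b E; inversion E; auto.
  - apply FinFun.Injective_map_NoDup; auto. intros a b E; inversion E; auto.
  - intros a H1 H2. apply in_map_iff in H1, H2.
    destruct H1 as [? [<- _]]. destruct H2 as [? [E _]]. discriminate.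
Qed.

Lemma walk S m s0 : Forall is_aut S -> length s0 = m ->
  level_transitive (generated S) ->
  forall N, N + 1 <= 2 ^ m ->
  exists W, Forall (fun p => fst p < length S) W /\ length W <= 2 * N /\
    exists D, NoDup D /\ N + 1 <= length D /\ incl D (vis S W s0).
Proof.
  intros HS Hs0 HT. induction N; intros HN.
  - exists []. split; [constructor|split; [simpl; lia|]].
    exists [s0]. split; [repeat constructor; auto|split; [simpl; lia|]].
    intros x Hx; simpl; auto.
  - destruct IHN as [W [VW [LW [D [ND [LD ID]]]]]]; [lia|].
    destruct (classic (forall x, In x (all_str m) -> In x (vis S W s0))) as [All|NAll].
    + exists W. split; auto. split; [lia|].
      exists (all_str m). split; [apply all_str_nodup|]. split; [rewrite all_str_len; lia|].
      intros x Hx; auto.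
    + apply not_all_ex_not in NAll. destruct NAll as [b Hb].
      apply imply_to_and in Hb. destruct Hb as [Hb1 Hb2].
      assert (Lb : length b = m).
      { clear -Hb1. revert b Hb1. induction m; simpl; intros b H.
        destruct H as [<-|[]]; auto.
        apply in_app_or in H. destruct H as [H|H]; apply in_map_iff in H;
        destruct H as [x [<- Hx]]; simpl; f_equal; auto. }
      destruct (HT m s0 b Hs0 Lb) as [g [[w [Vw <-]] Eg]].
      rewrite eval_endv in Eg.
      destruct (exit_lemma S (vis S W s0) (rev w) s0) as [a [p [Ha [Hp Hc]]]].
      { apply vis_head. } { rewrite Eg; auto. } { apply Forall_rev; auto. }
      destruct (split_vis S W s0 a Ha) as [W1 [W2 [EW Ea]]].
      exists (W1 ++ p :: flip p :: W2). split; [|split].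
      * subst W. apply Forall_app in VW. destruct VW. apply Forall_app; split; auto.
      * subst W. rewrite length_app in *. simpl. lia.
      * exists (act S p a :: D). split; [constructor; auto|split; [simpl; lia|]].
        intros x Hx. destruct Hx as [<-|Hx].
        -- apply vis_app. right. rewrite Ea. simpl. auto.
        -- apply ID in Hx. subst W. apply vis_app in Hx. apply vis_app.
           destruct Hx as [Hx|Hx]; auto. right. rewrite Ea in *. simpl.
           rewrite act_flip by auto. auto.
Qed.

Definition prefix (a u : str) := exists t, u = a ++ t.

Definition Inv (A : list str) (y : Aut) :=
  (forall u, (forall a, In a A -> ~ prefix a u) -> fst y u = u) /\
  (forall a, In a A -> exists u, prefix a u /\ fst y u <> u).

Definition goodz S (v : str) (z : Aut) :=
  generated S z /\ in_rist v z /\ exists u, fst z u <> u.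

Lemma prefix_eq a b u : length a = length b -> prefix a u -> prefix b u -> a = b.
Proof. intros L [t1 E1] [t2 E2]. subst. eapply app_len_inj; eauto. Qed.

Lemma rist_fix z v : is_aut z -> in_rist v z -> fst z v = v.
Proof.
  intros [H1 [H2 [H3 H4]]] R. destruct (classic (fst z v = v)) as [E|E]; auto.
  exfalso. set (w := fst z v) in *.
  assert (Np : ~ (exists t, w = v ++ t)).
  { intros [t Et]. assert (length t = 0).
    { assert (length w = length v) by (unfold w; auto). rewrite Et, length_app in H. lia. }
    destruct t; [|discriminate]. rewrite app_nil_r in Et. auto. }
  assert (Fw := R w Np). apply E.
  assert (Hw : w = snd z w) by (rewrite <- Fw at 2; rewrite H1; auto).
  unfold w in Hw. rewrite H1 in Hw. exact Hw.
Qed.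

Lemma rist_prefix z v u : is_aut z -> in_rist v z -> prefix v u -> prefix v (fst z u).
Proof.
  intros Hz R [t ->]. destruct Hz as [H1 [H2 [H3 H4]]] eqn:Ez.
  destruct (H4 v t) as [t' E]. exists t'. rewrite E, rist_fix; auto.
Qed.

Lemma Inv_nil : Inv [] one.
Proof. split; simpl; auto. intros a []. Qed.

Lemma Inv_mul S A y z v : Forall is_aut S -> goodz S v z -> Inv A y -> ~ In v A ->
  (forall a, In a A -> length a = length v) -> Inv (v :: A) (mul y z).
Proof.
  intros HS [Gz [Rz [u0 Hu0]]] [I1 I2] Nv LA.
  assert (Az : is_aut z) by (eapply is_aut_gen; eauto).
  split.
  - intros u Hu. simpl. rewrite Rz. apply I1. intros a Ha; apply Hu; simpl; auto.
    intro P; apply (Hu v); simpl; auto.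
  - intros a [<-|Ha].
    + assert (Pu0 : prefix v u0).
      { apply NNPP. intro P. apply Hu0. apply Rz. exact P. }
      exists u0. split; auto. simpl.
      rewrite I1. auto. intros a Ha Pa. apply Nv.
      assert (a = v). { apply prefix_eq with (fst z u0); auto. apply rist_prefix; auto. }
      subst; auto.
    + destruct (I2 a Ha) as [u [Pu Hu]]. exists u. split; auto. simpl.
      rewrite Rz; auto. intro P. apply Nv.
      assert (a = v) by (apply prefix_eq with u; auto). subst; auto.
Qed.

Lemma conj_move S K y z v p : Forall is_aut S -> fst p < length S ->
  generated S y -> goodz S v z ->
  exists z', within (generated S) (length S + 2 + K) 2 (Tup S K y z) (Tup S K y z') /\
    goodz S (act S p v) z'.
Proof.
  intros HS Hp Gy [Gz [Rz [u0 Hu0]]].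
  assert (AL := is_aut_letter S p HS).
  assert (E : exists z', within (generated S) (length S + 2 + K) 2 (Tup S K y z) (Tup S K y z')
      /\ generated S z' /\ forall u, fst z' u = fst (letter S p) (fst z (snd (letter S p) u))).
  { destruct p as [i b]. simpl in Hp.
    assert (M1 := move_zr S K y z i (negb b) Hp Gy Gz).
    assert (G1 : generated S (mul z (letter S (i, negb b)))).
    { apply gen_mul; auto. apply gen_letter; auto. }
    assert (M2 := move_zl S K y _ i b Hp Gy G1).
    eexists. split; [|split].
    - apply (within_trans _ _ 1 1 _ _ _ M1 M2).
    - apply gen_mul; auto. apply gen_letter; auto.
    - intros u. destruct b; reflexivity. }
  destruct E as [z' [W [Gz' F]]]. exists z'. split; auto.
  destruct AL as [H1 [H2 [H3 H4]]].
  split; [auto|split].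
  - intros u Pu. rewrite F. rewrite Rz. apply H2.
    intros [t Et]. apply Pu. destruct (H4 v t) as [t' Et'].
    exists t'. unfold act. rewrite <- Et'. rewrite <- Et. rewrite H2. auto.
  - exists (fst (letter S p) u0). rewrite F, H1. intro E. apply Hu0.
    rewrite <- (H1 (fst z u0)), E, H1. auto.
Qed.

Lemma visit S K m (f : str -> bool) v z y A P : Forall is_aut S ->
  length v = m -> goodz S v z -> generated S y -> Inv A y ->
  (forall a, In a A -> length a = m) -> (forall u, In u A <-> In u P /\ f u = true) ->
  exists y1 A1, within (generated S) (length S + 2 + K) 1 (Tup S K y z) (Tup S K y1 z) /\
    generated S y1 /\ Inv A1 y1 /\ (forall a, In a A1 -> length a = m) /\
    (forall u, In u A1 <-> (In u P \/ u = v) /\ f u = true).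
Proof.
  intros HS Lv Gd Gy I LA IA.
  destruct (f v) eqn:Fv; [destruct (classic (In v A)) as [Iv|Iv]|].
  - exists y, A. split; [apply within_refl|]. split; auto. split; auto. split; auto.
    intro u. rewrite IA. split; [intros [? ?]; auto|]. intros [[?|<-] ?]; auto.
    apply IA; auto.
  - exists (mul y z), (v :: A). split.
    + apply move_y; auto. apply Gd.
    + split. apply gen_mul; auto; apply Gd. split.
      * eapply Inv_mul; eauto. intros; rewrite LA; auto.
      * split. intros a [<-|Ha]; auto.
        intro u. simpl. rewrite IA. split.
        -- intros [<-|[? ?]]; auto.
        -- intros [[?|<-] ?]; auto.
  - exists y, A. split; [apply within_refl|]. split; auto. split; auto. split; auto.
    intro u. rewrite IA. split; [intros [? ?]; auto|]. intros [[?|<-] ?]; auto.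
    congruence.
Qed.

Lemma process S K m (f : str -> bool) : Forall is_aut S ->
  forall W, Forall (fun p => fst p < length S) W ->
  forall v z y A P, length v = m -> goodz S v z -> generated S y -> Inv A y ->
  (forall a, In a A -> length a = m) -> (forall u, In u A <-> In u P /\ f u = true) ->
  exists y' z' A', within (generated S) (length S + 2 + K) (3 * length W + 1)
      (Tup S K y z) (Tup S K y' z') /\
    generated S y' /\ Inv A' y' /\ (forall a, In a A' -> length a = m) /\
    (forall u, In u A' <-> (In u P \/ In u (vis S W v)) /\ f u = true).
Proof.
  intros HS W. induction W as [|p W IH]; intros VW v z y A P Lv Gd Gy I LA IA;
  destruct (visit S K m f v z y A P HS Lv Gd Gy I LA IA) as [y1 [A1 [W1 [G1 [I1 [L1 IA1]]]]]].
  - exists y1, z, A1. split; [exact W1|]. split; [auto|split; [auto|split; [auto|]]].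
    intro u. split.
    + intros H. apply IA1 in H. simpl. destruct H as [[?|?] ?]; auto.
    + intros [[?|[<-|[]]] ?]; apply IA1; auto.
  - inversion VW as [|? ? H1 H2].
    destruct (conj_move S K y1 z v p HS H1 G1 Gd) as [z2 [W2 Gd2]].
    assert (L2 : length (act S p v) = m) by (rewrite act_len; auto).
    destruct (IH H2 (act S p v) z2 y1 A1 (P ++ [v]) L2 Gd2 G1 I1 L1) as [y' [z' [A' [W3 R]]]].
    { intro u. rewrite IA1, in_app_iff. simpl. intuition. }
    exists y', z', A'. split.
    + replace (3 * length (p :: W) + 1) with (1 + 2 + (3 * length W + 1)) by (simpl; lia).
      eapply within_trans; [eapply within_trans; [exact W1|exact W2]|exact W3].
    + destruct R as [R1 [R2 [R3 R4]]]. split; [auto|split; [auto|split; [auto|]]].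
      intro u. split.
      * intros Hu. apply R4 in Hu. destruct Hu as [Hu ?]. rewrite in_app_iff in Hu.
        simpl in *. intuition.
      * intros [Hu ?]. apply R4. split; auto. rewrite in_app_iff. simpl in *. intuition.
Qed.

Lemma all_str_len_in m x : In x (all_str m) -> length x = m.
Proof.
  revert x. induction m; simpl; intros b H.
  destruct H as [<-|[]]; auto.
  apply in_app_or in H. destruct H as [H|H]; apply in_map_iff in H;
  destruct H as [x [<- Hx]]; simpl; f_equal; auto.
Qed.

Lemma pow2_pos m : 1 <= 2 ^ m.
Proof. induction m; simpl; lia. Qed.

Lemma build S K w : Forall (fun p => fst p < length S) w ->
  forall y z, generated S y -> generated S z ->
  exists z', within (generated S) (length S + 2 + K) (length w) (Tup S K y z) (Tup S K y z') /\
    generated S z' /\ forall u, fst z' u = fst z (fst (eval S w) u).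
Proof.
  induction w as [|[i b] w IH]; intros Vw y z Gy Gz.
  - exists z. split; [apply within_refl|]. split; auto.
  - inversion Vw as [|? ? Hp Hw]. simpl in Hp.
    assert (G1 : generated S (mul z (letter S (i, b)))).
    { apply gen_mul; auto. apply gen_letter; auto. }
    destruct (IH Hw y _ Gy G1) as [z' [W' [G' F']]].
    exists z'. split; [|split; auto].
    + change (length ((i,b) :: w)) with (1 + length w).
      eapply within_trans; [apply move_zr; auto|exact W']. auto.
Qed.

Definition streq (a b : str) : bool := if list_eq_dec Bool.bool_dec a b then true else false.
Lemma streq_true a b : streq a b = true <-> a = b.
Proof. unfold streq. destruct (list_eq_dec Bool.bool_dec a b); split; congruence. Qed.
Lemma streq_false a b : a <> b -> streq a b = false.
Proof. intros H. destruct (streq a b) eqn:E; auto. apply streq_true in E; contradiction. Qed.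

Definition fds (D : list str) (ds : list bool) (u : str) : bool :=
  existsb (fun db => andb (snd db) (streq (fst db) u)) (combine D ds).

Lemma fds_cons d D b ds u : fds (d::D) (b::ds) u = orb (andb b (streq d u)) (fds D ds u).
Proof. reflexivity. Qed.

Lemma fds_in D ds u : fds D ds u = true -> In u D.
Proof.
  revert ds; induction D as [|d D IH]; intros [|b ds]; try discriminate.
  rewrite fds_cons. intros H. apply Bool.orb_true_iff in H. destruct H as [H|H].
  - apply Bool.andb_true_iff in H. destruct H as [_ H]. apply streq_true in H. left; auto.
  - right; eapply IH; eauto.
Qed.

Lemma fds_diff D : NoDup D -> forall ds ds', length ds = length D -> length ds' = length D ->
  ds <> ds' -> exists u, In u D /\ fds D ds u <> fds D ds' u.
Proof.
  induction D as [|d D IH]; intros ND [|b ds] [|b' ds'] L1 L2 Ne; simpl in L1, L2;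
    try discriminate; try (exfalso; apply Ne; reflexivity).
  inversion ND as [|? ? Nd ND']; subst.
  destruct (Bool.bool_dec b b') as [<-|Nb].
  - destruct (IH ND' ds ds') as [u [Hu Du]]; try lia. congruence.
    exists u. split; [simpl; auto|]. rewrite !fds_cons.
    rewrite streq_false by (intro; subst; contradiction).
    rewrite !Bool.andb_false_r. simpl. auto.
  - exists d. split; [simpl; auto|]. rewrite !fds_cons.
    assert (streq d d = true) as -> by (apply streq_true; auto).
    rewrite !Bool.andb_true_r.
    assert (E1 : fds D ds d = false).
    { destruct (fds D ds d) eqn:E; auto. apply fds_in in E; contradiction. }
    assert (E2 : fds D ds' d = false).
    { destruct (fds D ds' d) eqn:E; auto. apply fds_in in E; contradiction. }
    rewrite E1, E2. destruct b, b'; simpl; congruence.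
Qed.

Lemma count_lemma {X Y : Type} (D : list X) (P : X -> Y -> Prop) : NoDup D ->
  (forall x, In x D -> exists y, P x y) ->
  (forall x x' y y', In x D -> In x' D -> x <> x' -> P x y -> P x' y' -> y <> y') ->
  exists l, NoDup l /\ length l = length D /\ forall y, In y l -> exists x, In x D /\ P x y.
Proof.
  induction D as [|d D IH]; intros ND Ex Dis.
  - exists []. split; [constructor|split; auto]. intros y [].
  - inversion ND as [|? ? Nd ND']; subst.
    assert (IH' : exists l, NoDup l /\ length l = length D /\ forall y, In y l -> exists x, In x D /\ P x y).
    { apply IH. exact ND'. intros; apply Ex; simpl; auto. intros x x' y y' H1 H2; apply Dis; simpl; auto. }
    destruct IH' as [l [Nl [Ll Il]]].
    destruct (Ex d) as [y0 Py]; [simpl; auto|].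
    exists (y0 :: l). split; [constructor; auto|split; [simpl; auto|]].
    + intro Hy. destruct (Il y0 Hy) as [x [Hx Px]].
      eapply (Dis d x y0 y0); simpl; eauto. intro; subst; contradiction.
    + intros y' [<-|Hy]. exists d; simpl; auto.
      destruct (Il y' Hy) as [x [? ?]]. exists x; simpl; auto.
Qed.

Lemma Tup_inj S K y z y' z' : Tup S K y z = Tup S K y' z' -> y = y'.
Proof.
  intros E. rewrite <- (Tup_nthy S K y z), <- (Tup_nthy S K y' z'), E. auto.
Qed.

Lemma nontriv S g : Forall is_aut S -> generated S g -> g <> one -> exists u, fst g u <> u.
Proof.
  intros HS Gg Ng. apply NNPP. intro H. apply Ng.
  assert (F : forall u, fst g u = u).
  { intro u. apply NNPP. intro E. apply H. eauto. }
  destruct (is_aut_gen S g HS Gg) as [H1 _].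
  destruct g as [a b]. simpl in *. unfold one. f_equal.
  - extensionality u. auto.
  - extensionality u. rewrite <- (F u) at 1. auto.
Qed.

Lemma level_count S K m (alpha : R) (c : nat) : Forall is_aut S ->
  level_transitive (generated S) -> 1 <= m ->
  (exists s : str, length s = m /\
       exists g, generated S g /\ in_rist s g /\ g <> one /\
         word_length_le S g (alpha * 2 ^ m)%R) ->
  (alpha + 7 <= INR c)%R ->
  exists l, NoDup l /\ 2 ^ (2 ^ m) <= length l /\
    forall T, In T l -> within (generated S) (length S + 2 + K) (c * 2 ^ m) (Tup S K one one) T.
Proof.
  intros HS HT Hm [s [Ls [g [Gg [Rg [Ng [w [Vw [Lw Ew]]]]]]]]] Hc.
  destruct (nontriv S g HS Gg Ng) as [u0 Hu0].
  destruct (build S K w Vw one one (gen_one S) (gen_one S)) as [zh [Wh [Gh Fh]]].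
  assert (Gd : goodz S s zh).
  { split; auto. split.
    - intros u Pu. rewrite Fh. simpl. rewrite Ew. apply Rg; auto.
    - exists u0. rewrite Fh. simpl. rewrite Ew. auto. }
  assert (P2 := pow2_pos m).
  destruct (walk S m s HS Ls HT (2 ^ m - 1)) as [W [VW [LW [D [ND [LD ID]]]]]]; [lia|].
  set (R0 := length w + (3 * length W + 1)).
  assert (HR : R0 <= c * 2 ^ m).
  { apply INR_le. unfold R0. rewrite plus_INR, mult_INR.
    assert (E2 : INR (2 ^ m) = (2 ^ m)%R) by (rewrite pow_INR; simpl; f_equal; lra).
    assert (INR (3 * length W + 1) <= INR (6 * 2 ^ m))%R by (apply le_INR; lia).
    rewrite mult_INR, E2 in H. replace (INR 6) with 6%R in H by (simpl; lra).
    assert (1 <= 2 ^ m)%R by (rewrite <- E2; apply (le_INR 1); auto).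
    assert (0 <= (INR c - alpha - 7) * 2 ^ m)%R by (apply Rmult_le_pos; lra).
    rewrite E2. lra. }
  set (Pr := fun (ds : list bool) (T : list Aut) =>
     exists y z A, T = Tup S K y z /\ Inv A y /\ (forall a, In a A -> length a = m) /\
       (forall x, In x A <-> In x (vis S W s) /\ fds D ds x = true) /\
       within (generated S) (length S + 2 + K) (c * 2 ^ m) (Tup S K one one) T).
  destruct (count_lemma (all_str (length D)) Pr (all_str_nodup _)) as [l [Nl [Ll Il]]].
  - intros ds _.
    destruct (process S K m (fds D ds) HS W VW s zh one [] [] Ls Gd (gen_one S) Inv_nil)
      as [y' [z' [A' [W2 [G2 [I2 [L2 IA2]]]]]]].
    + intros a [].
    + intros u; simpl; tauto.
    + exists (Tup S K y' z'), y', z', A'. split; auto. split; auto. split; auto. split.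
      * intros x. rewrite IA2. simpl. tauto.
      * eapply within_mono; [exact HR|]. eapply within_trans; [exact Wh|exact W2].
  - intros ds ds' T T' Hd Hd' Ne [y [z [A [ET [IA [LA [HA _]]]]]]] [y' [z' [A' [ET' [IA' [LA' [HA' _]]]]]]].
    apply all_str_len_in in Hd, Hd'.
    destruct (fds_diff D ND ds ds' Hd Hd' Ne) as [u [Hu Du]].
    assert (Vu : In u (vis S W s)) by auto.
    assert (Lu : length u = m) by (rewrite (vis_len S W s u HS Vu); auto).
    intro E. subst T T'. apply Tup_inj in E. subst y'.
    assert (Key : forall A1 A2 y, Inv A1 y -> Inv A2 y -> (forall a, In a A2 -> length a = m) ->
               In u A1 -> ~ In u A2 -> False).
    { intros A1 A2 y0 [_ I1] [I2 _] L2 H1 H2.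
      destruct (I1 u H1) as [x [Px Hx]]. apply Hx. apply I2.
      intros a Ha Pa. apply H2. assert (a = u) by (apply (prefix_eq a u x); auto; rewrite L2; auto).
      subst; auto. }
    destruct (fds D ds u) eqn:E1; destruct (fds D ds' u) eqn:E2; try congruence.
    + apply (Key A A' y IA IA' LA'). apply HA; auto. intro H; apply HA' in H. destruct H; congruence.
    + apply (Key A' A y IA' IA LA). apply HA'; auto. intro H; apply HA in H. destruct H; congruence.
  - exists l. split; auto. split.
    + rewrite Ll, all_str_len. apply Nat.pow_le_mono_r; lia.
    + intros T HTl. destruct (Il T HTl) as [ds [_ [y [z [A [_ [_ [_ [_ WT]]]]]]]]]. auto.
Qed.

Theorem lemma4p1 (n : nat) (S : list Aut) (G : Aut -> Prop) :
  length S = n ->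
  Forall is_aut S ->
  (forall g, G g <-> generated S g) ->
  level_transitive G ->
  (exists alpha : R, forall m : nat, 1 <= m ->
     exists s : str, length s = m /\
       exists g, G g /\ in_rist s g /\ g <> one /\
         word_length_le S g (alpha * 2 ^ m)%R) ->
  forall k : nat, n + 2 <= k ->
    component_exp_growth G k (S ++ repeat one (k - n)).
Proof.
  intros HSn HS HG HT [alpha Ha] k Hk.
  assert (EG : G = generated S).
  { extensionality g. apply propositional_extensionality. auto. }
  subst G n.
  set (K := k - length S - 2).
  assert (Ek : k = length S + 2 + K) by lia.
  assert (Ev0 : S ++ repeat one (k - length S) = Tup S K one one).
  { unfold Tup. replace (k - length S) with (2 + K) by lia. reflexivity. }
  rewrite Ev0, Ek.
  set (c := (Z.to_nat (up alpha) + 7)%nat).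
  assert (Hc : (alpha + 7 <= INR c)%R).
  { unfold c. rewrite plus_INR. replace (INR 7) with 7%R by (simpl; lra).
    destruct (archimed alpha) as [A1 _].
    destruct (Z.lt_ge_cases (up alpha) 0) as [Hz|Hz].
    - apply IZR_lt in Hz. pose proof (pos_INR (Z.to_nat (up alpha))). lra.
    - rewrite INR_IZR_INZ, Z2Nat.id by auto. lra. }
  assert (c7 : 7 <= c) by (unfold c; lia).
  assert (Xpos : (0 < INR (2 * c))%R) by (apply lt_0_INR; lia).
  set (beta := Rpower 2 (/ INR (2 * c))).
  assert (Bpos : (0 < beta)%R) by (unfold beta, Rpower; apply exp_pos).
  assert (B1 : (1 < beta)%R).
  { unfold beta. rewrite <- (Rpower_O 2) at 1 by lra. apply Rpower_lt; [lra|].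
    apply Rinv_0_lt_compat; auto. }
  assert (B2 : (beta ^ (2 * c) = 2)%R).
  { rewrite <- Rpower_pow by auto. unfold beta. rewrite Rpower_mult, Rinv_l by lra.
    apply Rpower_1; lra. }
  unfold component_exp_growth.
  exists (Tup S K one one). split; [apply Tup_vertex; apply gen_one|].
  split; [exists 0; reflexivity|].
  exists beta. split; auto. exists (2 * c). intros r Hr.
  set (q := r / c).
  assert (Q1 : c * q <= r) by (apply Nat.mul_div_le; lia).
  assert (Q2 : r < c * (q + 1)).
  { pose proof (Nat.div_mod_eq r c). pose proof (Nat.mod_upper_bound r c). unfold q. lia. }
  assert (Q3 : 2 <= q) by nia.
  set (m := Nat.log2 q).
  destruct (Nat.log2_spec q) as [M1 M2]; [lia|]. fold m in M1, M2.
  assert (Hm : 1 <= m).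
  { destruct m as [|m']; [simpl in M2; lia|lia]. }
  destruct (level_count S K m alpha c HS HT Hm (Ha m Hm) Hc) as [l [Nl [Ll Wl]]].
  exists l. split; auto. split.
  - intros T HT'. eapply within_mono; [|apply Wl; auto].
    apply Nat.le_trans with (c * q); auto. apply Nat.mul_le_mono_l; auto.
  - assert (R1 : r <= 2 * c * 2 ^ m).
    { rewrite Nat.pow_succ_r' in M2.
      assert (c * (q + 1) <= c * (2 * 2 ^ m)) by (apply Nat.mul_le_mono_l; lia). lia. }
    apply Rle_trans with (beta ^ (2 * c * 2 ^ m))%R.
    { apply Rle_pow; lra || auto. }
    rewrite pow_mult, B2.
    apply Rle_trans with (INR (2 ^ (2 ^ m))).
    + rewrite pow_INR. replace (INR 2) with 2%R by (simpl; lra). lra.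
    + apply le_INR. auto.
Qed.
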